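(* There is a deterministic, non-contractive, strict online embedding of points arriving one by one from any metric space into HSTs such that, for every $n$, after $n$ points have arrived every pair $u,v$ of them satisfies $d_T(u,v)\le 2^n d(u,v)$; i.e., it has distortion $2^n$ on $n$ points, and it requires no prior knowledge of $n$.
   Context: For $\mu\ge1$, a $\mu$-HST is the metric on the leaves of a rooted tree with node weights $\varphi\ge0$ ($\varphi(v)=0$ iff $v$ is a leaf, $\varphi(v)\le\varphi(u)/\mu$ when $v$ is a child of $u$), with leaf distance $d_T(u,v)=\varphi(\mathrm{lca}(u,v))$; ''HSTs'' is the family of such metrics. A strict online embedding receives points of $(X,d)$ one at a time and upon arrival of each point (depending only on points so far) outputs an HST metric $d_T$ on all points arrived so far, such that distances between previously arrived points never change. Non-contractive means $d_T(u,v)\ge d(u,v)$ for all arrived $u,v$. *)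

(* Defs.v *)
From HB Require Import structures.
From mathcomp Require Import all_boot all_order all_algebra.
Set Implicit Arguments. Unset Strict Implicit. Unset Printing Implicit Defensive.
Import Order.TTheory GRing.Theory Num.Theory.
Local Open Scope ring_scope.

Definition is_metric (R : realDomainType) (X : Type) (d : X -> X -> R) : Prop :=
  (forall x y, 0 <= d x y) /\
  (forall x y, d x y = 0 <-> x = y) /\
  (forall x y, d x y = d y x) /\
  (forall x y z, d x z <= d x y + d y z).

Section Tree.
Variable V : finType.
Variable par : V -> V.     (* parent map; the root is its own parent *)
Variable root : V.

Definition ancestor (u v : V) : bool :=
  [exists k : 'I_#|V|.+1, iter k par v == u].

Definition is_lca (u v w : V) : bool :=
  [&& ancestor w u, ancestor w v &
      [forall z, (ancestor z u && ancestor z v) ==> ancestor z w]].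

Definition lca (u v : V) : V := odflt root [pick w | is_lca u v w].

Definition is_child (c u : V) : bool := (c != root) && (par c == u).

Definition is_leaf (v : V) : bool := [forall c, ~~ is_child c v].

Definition is_HST_tree (R : realFieldType) (mu : R) (phi : V -> R) : Prop :=
  par root = root /\
  (forall v, iter #|V| par v = root) /\
  (forall v, 0 <= phi v) /\
  (forall v, phi v = 0 <-> is_leaf v) /\
  (forall u v, is_child v u -> phi v <= phi u / mu).
End Tree.

(* dT, restricted to indices < n (the points arrived so far, indexed by
   arrival order), is a mu-HST metric: the points are mapped to leaves of a
   mu-HST and dT i j = phi (lca (leaf i) (leaf j)). *)
Definition mu_HST_metric (R : realFieldType) (mu : R) (n : nat)
    (dT : nat -> nat -> R) : Prop :=
  exists (V : finType) (par : V -> V) (root : V) (phi : V -> R) (leaf : nat -> V),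
    is_HST_tree par root mu phi /\
    (forall i, (i < n)%N -> is_leaf par root (leaf i)) /\
    (forall i j, (i < n)%N -> (j < n)%N ->
       dT i j = phi (lca par root (leaf i) (leaf j))).

Definition HST_metric (R : realFieldType) (n : nat) (dT : nat -> nat -> R) : Prop :=
  exists mu : R, 1 <= mu /\ mu_HST_metric mu n dT.

Definition distinct_prefix (X : Type) (x : nat -> X) (n : nat) : Prop :=
  forall i j, (i < n)%N -> (j < n)%N -> x i = x j -> i = j.

(* Main.v *)
Require Import Defs.
From HB Require Import structures.
From mathcomp Require Import all_boot all_order all_algebra.
From mathcomp Require Import reals.
From mathcomp Require Import zify ring lra.
Set Implicit Arguments. Unset Strict Implicit. Unset Printing Implicit Defensive.
Import Order.TTheory GRing.Theory Num.Theory.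
Local Open Scope ring_scope.


Section UltraTree.
Variable R : realFieldType.
Variables (n' m' : nat) (U : nat -> nat -> R) (r : nat -> R).
Local Notation n := n'.+1.
Hypothesis Usym : forall a b, (a < n)%N -> (b < n)%N -> U a b = U b a.
Hypothesis Udiag : forall a, (a < n)%N -> U a a = 0.
Hypothesis Upos : forall a b, (a < n)%N -> (b < n)%N -> a != b -> 0 < U a b.
Hypothesis Uult : forall a b c, (a < n)%N -> (b < n)%N -> (c < n)%N ->
  U a c <= Num.max (U a b) (U b c).
Hypothesis rmono : forall l l', (l < l')%N -> (l' <= m')%N -> r l < r l'.
Hypothesis r0 : r 0 = 0.
Hypothesis Ulev : forall a b, (a < n)%N -> (b < n)%N ->
  exists2 l, (l <= m')%N & r l = U a b.

Lemma rle l l' : (l <= l')%N -> (l' <= m')%N -> r l <= r l'.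
Proof.
rewrite leq_eqVlt => /orP [/eqP -> //|H1 H2]; exact/ltW/rmono.
Qed.

Lemma rge0 l : (l <= m')%N -> 0 <= r l.
Proof. by move=> H; rewrite -r0; apply: rle. Qed.

Lemma rinj_le l l' : (l <= m')%N -> (l' <= m')%N -> r l <= r l' -> (l <= l')%N.
Proof.
move=> Hl Hl' H; rewrite leqNgt; apply/negP => Hlt.
by have := rmono Hlt Hl; rewrite ltNge H.
Qed.

Lemma Uge0 a b : (a < n)%N -> (b < n)%N -> 0 <= U a b.
Proof.
move=> Ha Hb; case: (eqVneq a b) => [->|Hab]; first by rewrite Udiag.
exact/ltW/Upos.
Qed.

Definition rep a l := find (fun k => U a k <= r l) (iota 0 n).

Lemma rep_has a l : (a < n)%N -> (l <= m')%N -> has (fun k => U a k <= r l) (iota 0 n).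
Proof.
move=> Ha Hl; apply/hasP; exists a; first by rewrite mem_iota.
by rewrite Udiag // rge0.
Qed.

Lemma rep_lt a l : (a < n)%N -> (l <= m')%N -> (rep a l < n)%N.
Proof.
by move=> Ha Hl; have := rep_has Ha Hl; rewrite has_find size_iota.
Qed.

Lemma rep_U a l : (a < n)%N -> (l <= m')%N -> U a (rep a l) <= r l.
Proof.
move=> Ha Hl; have := nth_find 0%N (rep_has Ha Hl).
by rewrite nth_iota ?add0n //; apply: rep_lt.
Qed.

Lemma rep_min a k l : (k < n)%N -> U a k <= r l -> (rep a l <= k)%N.
Proof.
move=> Hk H; rewrite leqNgt; apply/negP => Hlt.
by have := before_find 0%N Hlt; rewrite nth_iota ?add0n // H.
Qed.

Lemma rep_eq a b l : (a < n)%N -> (b < n)%N -> (l <= m')%N ->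
  U a b <= r l -> rep a l = rep b l.
Proof.
move=> Ha Hb Hl H; apply: eq_in_find => k; rewrite mem_iota add0n => /andP [_ Hk].
apply/idP/idP => Hk'.
- apply: le_trans (Uult Hb Ha Hk) _; rewrite ge_max Hk' andbT.
  by rewrite Usym.
- by apply: le_trans (Uult Ha Hb Hk) _; rewrite ge_max Hk' H.
Qed.

Lemma rep_eq_U a b l : (a < n)%N -> (b < n)%N -> (l <= m')%N ->
  rep a l = rep b l -> U a b <= r l.
Proof.
move=> Ha Hb Hl E; have Hc := rep_lt Ha Hl.
apply: le_trans (Uult Ha Hc Hb) _; rewrite ge_max rep_U //=.
by rewrite Usym // E rep_U.
Qed.

Lemma rep_rep a l l' : (a < n)%N -> (l <= l')%N -> (l' <= m')%N ->
  rep (rep a l) l' = rep a l'.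
Proof.
move=> Ha Hll' Hl'; have Hl : (l <= m')%N by apply: leq_trans Hll' Hl'.
apply: rep_eq => //; first exact: rep_lt.
rewrite Usym //; last exact: rep_lt.
by apply: le_trans (rep_U Ha Hl) (rle Hll' Hl').
Qed.

Lemma rep_0 a : (a < n)%N -> rep a 0 = a.
Proof.
move=> Ha; apply/eqP; rewrite eq_sym; apply/negPn/negP => H.
have := Upos Ha (rep_lt Ha (leq0n m')) H.
by rewrite ltNge (le_trans (rep_U Ha (leq0n _))) // r0.
Qed.

Lemma rep_top a : (a < n)%N -> rep a m' = 0%N.
Proof.
move=> Ha; apply/eqP; rewrite -leqn0; apply: rep_min => //.
have [l Hl <-] := Ulev Ha (ltn0Sn n').
exact: rle.
Qed.


Definition VT := ('I_n * 'I_m'.+1)%type.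
Definition node a l : VT := (inord (rep a l), inord l).
Definition troot : VT := node 0 m'.
Definition tpar (v : VT) : VT := node v.1 (minn v.2.+1 m').
Definition tphi (v : VT) : R := if rep v.1 v.2 == v.1 then r v.2 else 0.

Lemma node1 a l : (a < n)%N -> (l <= m')%N -> ((node a l).1 : nat) = rep a l.
Proof. by move=> Ha Hl; rewrite /= inordK // rep_lt. Qed.

Lemma node2 a l : (l <= m')%N -> ((node a l).2 : nat) = l.
Proof. by move=> Hl; rewrite /= inordK. Qed.

Lemma v2le (v : VT) : (v.2 <= m')%N.
Proof. by case: v => a [l Hl]. Qed.

Lemma node_rep a l l' : (a < n)%N -> (l <= l')%N -> (l' <= m')%N ->
  node (rep a l) l' = node a l'.
Proof. by move=> Ha H1 H2; rewrite /node rep_rep. Qed.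

Lemma node_top a b : (a < n)%N -> (b < n)%N -> node a m' = node b m'.
Proof. by move=> Ha Hb; rewrite /node !rep_top. Qed.

Lemma node_canon (v : VT) : rep v.1 v.2 = v.1 -> v = node v.1 v.2.
Proof.
case: v => a l /= E; rewrite /node E !inord_val //.
Qed.

Lemma node_inj a b l l' : (a < n)%N -> (b < n)%N -> (l <= m')%N -> (l' <= m')%N ->
  node a l = node b l' -> l = l' /\ rep a l = rep b l'.
Proof.
move=> Ha Hb Hl Hl' E; split.
- by rewrite -(node2 a Hl) -(node2 b Hl') E.
- by rewrite -(node1 Ha Hl) -(node1 Hb Hl') E.
Qed.

Lemma tphi_node a l : (a < n)%N -> (l <= m')%N -> tphi (node a l) = r l.
Proof.
move=> Ha Hl; rewrite /tphi node1 // node2 // rep_rep ?eqxx //.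
Qed.

Lemma tpar_node a l : (a < n)%N -> (l <= m')%N ->
  tpar (node a l) = node a (minn l.+1 m').
Proof.
move=> Ha Hl; rewrite /tpar node1 // node2 // node_rep //.
  by rewrite leq_min leqnSn.
by rewrite geq_minr.
Qed.

Lemma iter_node k a l : (a < n)%N -> (l <= m')%N ->
  iter k tpar (node a l) = node a (minn (l + k) m').
Proof.
move=> Ha Hl; elim: k => [|k IH]; first by rewrite addn0 (minn_idPl Hl).
rewrite iterS IH tpar_node ?geq_minr //; congr node.
rewrite addnS; lia.
Qed.

Lemma cardVT : #|{: VT}| = (n * m'.+1)%N.
Proof. by rewrite card_prod !card_ord. Qed.

Lemma tpar_eq (v : VT) : tpar v = node v.1 (minn v.2.+1 m').
Proof. by []. Qed.

Lemma iter_all (v : VT) : iter #|{: VT}| tpar v = troot.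
Proof.
rewrite cardVT; set N := (n * m'.+1)%N.
have HN : (m' < N)%N by rewrite /N mulSn; lia.
have -> : N = (N.-1).+1 by lia.
have Hv1 : (v.1 < n)%N by case: v => [[a Ha] l].
rewrite iterSr tpar_eq iter_node ?geq_minr //.
rewrite /troot; have -> : minn (minn v.2.+1 m' + N.-1) m' = m' by lia.
by apply: node_top.
Qed.


Lemma ancestor_node w a l : (a < n)%N -> (l <= m')%N ->
  ancestor tpar w (node a l) <-> exists l', [/\ (l <= l')%N, (l' <= m')%N & w = node a l'].
Proof.
move=> Ha Hl; split.
- case/existsP => k /eqP <-; rewrite iter_node //.
  exists (minn (l + k) m'); split => //; [lia | exact: geq_minr].
- case=> l' [H1 H2 ->]; apply/existsP.
  have Hk : (l' - l < #|{: VT}|.+1)%N by rewrite cardVT mulSn; lia.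
  exists (Ordinal Hk); rewrite iter_node //=; apply/eqP; congr node; lia.
Qed.

Lemma canon_or_leaf (v : VT) : (rep v.1 v.2 == v.1) && (0 < v.2)%N ->
  ~~ is_leaf tpar troot v.
Proof.
case/andP => /eqP E H0; apply/negP => /forallP /(_ (node v.1 v.2.-1)).
have Hv1 : (v.1 < n)%N by case: v {E H0} => [[a Ha] l].
have Hv2 := v2le v.
rewrite /is_child negb_and negbK => /orP [/eqP|].
- rewrite /troot => /(node_inj Hv1 (ltn0Sn _)) []; lia.
- rewrite tpar_node //; last lia.
  rewrite -[X in node X _]E node_rep //; try lia.
  have -> : minn v.2.-1.+1 m' = v.2 by lia.
  by rewrite -node_canon // eqxx.
Qed.

Lemma tpar_canon (c : VT) : rep (tpar c).1 (tpar c).2 = (tpar c).1.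
Proof.
have Hc1 : (c.1 < n)%N by case: c => [[a Ha] l].
rewrite tpar_eq node1 ?geq_minr // node2 ?geq_minr // rep_rep //.
  exact: geq_minr.
Qed.

Lemma leaf_iff (v : VT) : tphi v = 0 <-> is_leaf tpar troot v.
Proof.
have Hv1 : (v.1 < n)%N by case: v => [[a Ha] l].
have Hv2 := v2le v.
split.
- rewrite /tphi => H; apply/forallP => c; rewrite /is_child.
  apply/negP => /andP [Hc /eqP Ep].
  move: H; rewrite -Ep tpar_canon eqxx.
  have Hc1 : (c.1 < n)%N by case: c {Hc Ep} => [[a Ha] l].
  rewrite tpar_eq node2 ?geq_minr //.
  case: (posnP (minn c.2.+1 m')) => [E0|Hp].
  + (* m' = 0: c must be root *)
    have Em : m' = 0%N by lia.
    move: Hc; rewrite /troot.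
    have Hc2 : (c.2 <= m')%N := v2le c.
    have Ec20 : c.2 = 0%N :> nat.
   lia.
    have Ec2 : c.2 = m' :> nat by lia.
    have -> : c = node c.1 c.2.
      by apply: node_canon; rewrite Ec20 rep_0.
    by rewrite Ec2 (node_top Hc1 (ltn0Sn _)) eqxx.
  + by move=> H0; have := rmono Hp (geq_minr _ _); rewrite H0 r0 ltxx.
- move=> Hl; rewrite /tphi; case: ifP => // E.
  case: (posnP v.2) => [->|Hp]; first by rewrite r0.
  by have := canon_or_leaf (v := v); rewrite E Hp Hl => /(_ isT).
Qed.

Lemma tphi_ge0 (v : VT) : 0 <= tphi v.
Proof. rewrite /tphi; case: ifP => // _; exact/rge0/v2le. Qed.

Lemma tphi_le (v : VT) : tphi v <= r v.2.
Proof. rewrite /tphi; case: ifP => // _; exact/rge0/v2le. Qed.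

Lemma tree_ok : is_HST_tree tpar troot 1 tphi.
Proof.
split; [|split; [|split; [|split]]].
- rewrite /troot tpar_node //; congr node; lia.
- exact: iter_all.
- exact: tphi_ge0.
- exact: leaf_iff.
- move=> u c /andP [_ /eqP <-]; rewrite divr1.
  have Hc1 : (c.1 < n)%N by case: c => [[a Ha] l].
  rewrite tpar_eq tphi_node ?geq_minr //.
  have Hc2 : (c.2 <= m')%N := v2le c.
  apply: le_trans (tphi_le c) _; apply: rle; last exact: geq_minr.
  by rewrite leq_min leqnSn v2le.
Qed.


Lemma lca_phi i j : (i < n)%N -> (j < n)%N ->
  U i j = tphi (lca tpar troot (node i 0) (node j 0)).
Proof.
move=> Hi Hj; have [L HL EL] := Ulev Hi Hj.
have Hsame : forall l, (l <= m')%N -> node i l = node j l -> (L <= l)%N.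
  move=> l Hl E; have [_ E2] := node_inj Hi Hj Hl Hl E.
  apply: rinj_le => //; rewrite EL; exact: rep_eq_U.
have Hw : is_lca tpar (node i 0) (node j 0) (node i L).
  apply/and3P; split.
  - by apply/ancestor_node => //; exists L.
  - apply/ancestor_node => //; exists L; split => //.
    rewrite /node (rep_eq Hi Hj HL) // EL //.
  - apply/forallP => z; apply/implyP => /andP [].
    move=> /ancestor_node [] // l1 [_ H1 ->] /ancestor_node [] // l2 [_ H2 E].
    have [El _] := node_inj Hi Hj H1 H2 E.
    apply/ancestor_node => //; exists l1; split => //.
    by apply: Hsame => //; rewrite E El.
rewrite /lca; case: pickP => [w' Hw' | /(_ (node i L))]; last by rewrite Hw.
case/and3P: Hw' => A1 A2 /forallP /(_ (node i L)).
case/and3P: Hw => B1 B2 _; rewrite B1 B2 /= => A3.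
move: A1 => /ancestor_node [] // l1 [_ H1 E1].
move: A2 => /ancestor_node [] // l2 [_ H2 E2].
have [El _] := node_inj Hi Hj H1 H2 (etrans (esym E1) E2).
have HLl1 : (L <= l1)%N by apply: Hsame => //; rewrite -E1 E2 El.
move: A3; rewrite E1 => /ancestor_node [] // l' [Hl1l' Hl' E'].
have [EL' _] := node_inj Hi Hi HL Hl' E'.
have -> : l1 = L by lia.
by rewrite tphi_node.
Qed.

Lemma ultra_HST : mu_HST_metric 1 n U.
Proof.
exists _, tpar, troot, tphi, (fun i => node i 0); split; [exact: tree_ok|split].
- by move=> i Hi; apply/leaf_iff; rewrite tphi_node.
- by move=> i j Hi Hj; apply: lca_phi.
Qed.

End UltraTree.

Lemma ultra_HST_gen (R : realFieldType) (n : nat) (U : nat -> nat -> R) :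
  (forall a b, (a < n)%N -> (b < n)%N -> U a b = U b a) ->
  (forall a, (a < n)%N -> U a a = 0) ->
  (forall a b, (a < n)%N -> (b < n)%N -> a != b -> 0 < U a b) ->
  (forall a b c, (a < n)%N -> (b < n)%N -> (c < n)%N ->
     U a c <= Num.max (U a b) (U b c)) ->
  mu_HST_metric 1 n U.
Proof.
case: n => [|n'] Usym Udiag Upos Uult.
  have := @ultra_HST R 0 0 (fun _ _ => 0) (fun _ => 0).
  case.
  - by [].
  - by [].
  - by move=> a b; rewrite !ltnS !leqn0 => /eqP -> /eqP ->.
  - by move=> *; rewrite le_max lexx.
  - by move=> l l'; rewrite leqn0 => H /eqP E; move: H; rewrite E.
  - by [].
  - by move=> a b _ _; exists 0%N.
  move=> V [par [root [phi [leaf [Ht _]]]]].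
  by exists V, par, root, phi, leaf; split.
set vals := [seq U i k | i <- iota 0 n'.+1, k <- iota 0 n'.+1].
set s := sort <=%R (undup vals).
have mem_s : forall x, (x \in s) = (x \in vals) by move=> x; rewrite mem_sort mem_undup.
have Uin : forall a b, (a < n'.+1)%N -> (b < n'.+1)%N -> U a b \in s.
  move=> a b Ha Hb; rewrite mem_s; apply/allpairsP; exists (a, b).
  by rewrite !mem_iota !add0n Ha Hb.
have sge0 : forall x, x \in s -> 0 <= x.
  move=> x; rewrite mem_s => /allpairsP [[a b] [Ha Hb ->]].
  rewrite !mem_iota !add0n in Ha Hb.
  case: (eqVneq a b) => [->|Hab]; first by rewrite Udiag.
  exact/ltW/Upos.
have Hsz : (0 < size s)%N.
  by have := Uin 0%N 0%N isT isT; case: (s).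
have slt : sorted <%R s.
  rewrite lt_sorted_uniq_le sort_uniq undup_uniq /=.
  by apply: sort_sorted => x y; exact: le_total.
apply: (@ultra_HST R n' (size s).-1 U (fun l => nth 0 s l)) => //.
- move=> l l' Hll' Hl'.
  apply: (sorted_ltn_nth lt_trans) => //; rewrite inE; lia.
- have Hin := Uin 0%N 0%N isT isT; rewrite Udiag // in Hin.
  have H0 : 0 <= nth 0 s 0 by apply/sge0/mem_nth.
  case E: (index 0 s) => [|k].
    by have := nth_index 0 Hin; rewrite E.
  have := sorted_ltn_nth lt_trans 0 slt 0%N k.+1.
  rewrite !inE -E index_mem Hin Hsz nth_index // E => /(_ isT isT isT) H.
  by move: H0; rewrite leNgt H.
- move=> a b Ha Hb; exists (index (U a b) s).
    by have := Uin a b Ha Hb; rewrite -index_mem => H; rewrite -ltnS prednK.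
  exact/nth_index/Uin.
Qed.


Lemma arithA (R : realFieldType) (K del D Dj U F : R) :
  2 <= K -> 0 <= del -> 0 <= U -> 0 <= D -> 0 <= Dj ->
  D <= del + Dj -> 2 * K * Dj <= (K - 2) * U ->
  2 * K * del <= F -> U <= F ->
  4 * K * D <= (2 * K - 2) * F.
Proof.
move=> HK Hd HU HD HDj Htri Hold HF1 HF2.
have [HA|HB] := lerP D ((K - 1) * del).
- have P : (2 * K - 2) * (2 * K * del) <= (2 * K - 2) * F.
    by apply: ler_wpM2l => //; (timeout 10 lra).
  have Q : (4 * K) * D <= (4 * K) * ((K - 1) * del).
    by apply: ler_wpM2l => //; (timeout 10 lra).
  apply: le_trans Q _.
  by rewrite (_ : 4 * K * ((K - 1) * del) = (2 * K - 2) * (2 * K * del)) //; ring.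
- have P1 : (K - 1) * (2 * K * Dj) <= (K - 1) * ((K - 2) * U).
    by apply: ler_wpM2l => //; (timeout 10 lra).
  have P2 : (2 * K * (K - 1)) * (D - del) <= (2 * K * (K - 1)) * Dj.
    apply: ler_wpM2l; first by apply: mulr_ge0; (timeout 10 lra).
    (timeout 10 lra).
  have H1 : 2 * K * (D - (K - 1) * del) <= (K - 2) * ((K - 1) * U - 2 * K * D).
    rewrite -subr_ge0 in P1; rewrite -subr_ge0 in P2; rewrite -subr_ge0.
    have -> : (K - 2) * ((K - 1) * U - 2 * K * D) - 2 * K * (D - (K - 1) * del) =
      ((K - 1) * ((K - 2) * U) - (K - 1) * (2 * K * Dj)) +
      (2 * K * (K - 1) * Dj - 2 * K * (K - 1) * (D - del)) by ring.
    exact: addr_ge0.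
  have H2 : 0 < (K - 2) * ((K - 1) * U - 2 * K * D).
    apply: lt_le_trans H1; apply: mulr_gt0; first by apply: mulr_gt0; (timeout 10 lra).
    (timeout 10 lra).
  have H3 : 2 * K * D < (K - 1) * U.
    have HK2 : 0 < K - 2.
      rewrite lt_neqAle subr_ge0 HK andbT; apply/negP => /eqP E.
      by move: H2; rewrite -E mul0r ltxx.
    by rewrite -subr_gt0; move: H2; rewrite pmulr_rgt0.
  have P : (2 * K - 2) * U <= (2 * K - 2) * F.
    by apply: ler_wpM2l => //; (timeout 10 lra).
  apply: le_trans P; apply/ltW.
  have -> : (2 * K - 2) * U = 2 * ((K - 1) * U) by ring.
  have -> : 4 * K * D = 2 * (2 * K * D) by ring.
  by rewrite ltr_pM2l.
Qed.

Lemma arithOld (R : realFieldType) (K D U : R) :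
  0 <= U -> 2 * K * D <= (K - 2) * U -> 4 * K * D <= (2 * K - 2) * U.
Proof.
move=> HU H; rewrite -subr_ge0 in H; rewrite -subr_ge0.
have -> : (2 * K - 2) * U - 4 * K * D = 2 * ((K - 2) * U - 2 * K * D) + 2 * U by ring.
by apply: addr_ge0; apply: mulr_ge0.
Qed.

Section Alg.
Variable R : realFieldType.
Variable X : Type.
Variable d : X -> X -> R.

Fixpoint best (p : nat -> X) (m k : nat) : nat :=
  match k with
  | 0 => 0
  | k'.+1 => let b := best p m k' in
             if d (p m) (p k'.+1) < d (p m) (p b) then k'.+1 else b
  end.

Definition nn p m := best p m m.-1.
Definition delta p m := d (p m) (p (nn p m)).

Fixpoint Ualg (p : nat -> X) (m : nat) : nat -> nat -> R :=
  match m with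
  | 0 => fun _ _ => 0
  | m'.+1 =>
    let U := Ualg p m' in
    let F := fun b => Num.max (2 ^+ m'.+1 * delta p m') (U (nn p m') b) in
    fun a b =>
      if (a < m')%N && (b < m')%N then U a b
      else if (a == m') && (b < m')%N then F b
      else if (b == m') && (a < m')%N then F a
      else 0
  end.

Lemma best_ext p q m k : (forall i, (i <= maxn m k)%N -> p i = q i) ->
  best p m k = best q m k.
Proof.
move=> H; elim: k H => [//|k IH] H /=.
rewrite IH; last by move=> i Hi; apply: H; lia.
have Hb : (best q m k <= k)%N.
  elim: k {IH H} => [//|k IHk] /=; case: ifP => _ //; lia.
by rewrite !H //; lia.
Qed.

Lemma best_le p m k : (best p m k <= k)%N.
Proof. elim: k => [//|k IHk] /=; case: ifP => _ //; lia. Qed.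

Lemma best_min p m k i : (i <= k)%N -> d (p m) (p (best p m k)) <= d (p m) (p i).
Proof.
elim: k i => [|k IH] i Hi.
  by move: Hi; rewrite leqn0 => /eqP ->.
rewrite /=; case: ifP => Hlt.
- rewrite leq_eqVlt in Hi; case/orP: Hi => [/eqP ->//|Hi].
  exact: le_trans (ltW Hlt) (IH i Hi).
- rewrite leq_eqVlt in Hi; case/orP: Hi => [/eqP ->|Hi]; last exact: IH.
  by rewrite leNgt Hlt.
Qed.

Lemma Ualg_ext p q m : (forall i, (i < m)%N -> p i = q i) ->
  Ualg p m =2 Ualg q m.
Proof.
elim: m => [//|m IH] H a b /=.
have H' : forall i, (i < m)%N -> p i = q i by move=> i Hi; apply: H; lia.
have Enn : nn p m = nn q m.
  by apply: best_ext => i Hi; apply: H; lia.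
have Edel : delta p m = delta q m.
  rewrite /delta Enn !H //.
  have := best_le q m m.-1; rewrite /nn; lia.
by rewrite Enn Edel !IH.
Qed.


Hypothesis dmet : is_metric d.

Lemma d_ge0 x y : 0 <= d x y. Proof. by case: dmet. Qed.
Lemma d_sym x y : d x y = d y x. Proof. by case: dmet => _ [_ []]. Qed.
Lemma d_tri x y z : d x z <= d x y + d y z. Proof. by case: dmet => _ [_ [_]]. Qed.
Lemma d_xx x : d x x = 0. Proof. by case: dmet => _ [H _]; apply/H. Qed.

Definition Inv p m :=
 (forall a b, (a < m)%N -> (b < m)%N -> Ualg p m a b = Ualg p m b a) /\
 (forall a, (a < m)%N -> Ualg p m a a = 0) /\
 (forall a b, (a < m)%N -> (b < m)%N -> 0 <= Ualg p m a b) /\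
 (forall a b c, (a < m)%N -> (b < m)%N -> (c < m)%N ->
    Ualg p m a c <= Num.max (Ualg p m a b) (Ualg p m b c)) /\
 (forall a b, (a < m)%N -> (b < m)%N ->
    2 ^+ m.+1 * d (p a) (p b) <= (2 ^+ m - 2) * Ualg p m a b) /\
 (forall a b, (a < m)%N -> (b < m)%N ->
    Ualg p m a b <= 2 ^+ m * d (p a) (p b)).

Lemma Ualg_old p m a b : (a < m)%N -> (b < m)%N -> Ualg p m.+1 a b = Ualg p m a b.
Proof. by move=> Ha Hb /=; rewrite Ha Hb. Qed.

Lemma Ualg_l p m b : (b < m)%N ->
  Ualg p m.+1 m b = Num.max (2 ^+ m.+1 * delta p m) (Ualg p m (nn p m) b).
Proof. by move=> Hb /=; rewrite ltnn eqxx Hb. Qed.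

Lemma Ualg_r p m a : (a < m)%N ->
  Ualg p m.+1 a m = Num.max (2 ^+ m.+1 * delta p m) (Ualg p m (nn p m) a).
Proof. by move=> Ha /=; rewrite ltnn andbF (ltn_eqF Ha) eqxx Ha. Qed.

Lemma Ualg_mm p m : Ualg p m.+1 m m = 0.
Proof. by rewrite /= ltnn eqxx. Qed.

Lemma nn_lt p m : (0 < m)%N -> (nn p m < m)%N.
Proof. by move=> H; have := best_le p m m.-1; rewrite /nn; lia. Qed.

Lemma nn_min p m i : (i < m)%N -> delta p m <= d (p m) (p i).
Proof. by move=> H; apply: best_min; lia. Qed.

Lemma lt_or_eq x m : (x < m.+1)%N -> (x < m)%N \/ x = m.
Proof. lia. Qed.

Lemma Inv0 p : Inv p 0.
Proof. by do !split. Qed.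

Lemma Inv_step p m : Inv p m -> Inv p m.+1.
Proof.
move=> [Isym [Idiag [Ige0 [Iult [Ilow Iup]]]]].
set j := nn p m; set h := 2 ^+ m.+1 * delta p m.
set F := fun b => Num.max h (Ualg p m j b).
have EF : forall b, (b < m)%N -> Ualg p m.+1 m b = F b by move=> b Hb; rewrite Ualg_l.
have EF' : forall b, (b < m)%N -> Ualg p m.+1 b m = F b by move=> b Hb; rewrite Ualg_r.
have Eo : forall a b, (a < m)%N -> (b < m)%N -> Ualg p m.+1 a b = Ualg p m a b.
  by move=> a b Ha Hb; rewrite Ualg_old.
have Emm := Ualg_mm p m.
have Hj : forall b, (b < m)%N -> (j < m)%N by move=> b Hb; apply: nn_lt; lia.
have K0 : 0 <= 2 ^+ m :> R by apply: exprn_ge0.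
have hge0 : 0 <= h by apply: mulr_ge0; [apply: exprn_ge0 | apply: d_ge0].
have Fge0 : forall b, 0 <= F b by move=> b; rewrite le_max hge0.
have FgeU : forall b, Ualg p m j b <= F b by move=> b; rewrite le_max lexx orbT.
have Fgeh : forall b, h <= F b by move=> b; rewrite le_max lexx.
have Fa : forall x y, (x < m)%N -> (y < m)%N -> Ualg p m x y <= Num.max (F x) (F y).
  move=> x y Hx Hy; have Hjm := Hj x Hx.
  apply: le_trans (Iult x j y Hx Hjm Hy) _.
  rewrite [Ualg p m x j]Isym //.
  by rewrite ge_max !le_max !lexx !orbT.
have Fb : forall x y, (x < m)%N -> (y < m)%N -> F x <= Num.max (Ualg p m x y) (F y).
  move=> x y Hx Hy; have Hjm := Hj x Hx.
  rewrite ge_max; apply/andP; split; first by rewrite le_max Fgeh orbT.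
  apply: le_trans (Iult j y x Hjm Hy Hx) _.
  by rewrite [Ualg p m y x]Isym // ge_max !le_max !lexx !orbT.
set K : R := 2 ^+ m.
have EK1 : 2 ^+ m.+1 = 2 * K :> R by rewrite exprS.
have EK2 : 2 ^+ m.+2 = 4 * K :> R by rewrite /K !exprS; ring.
have Ktwo : forall b, (b < m)%N -> 2 <= K.
  move=> b Hb; rewrite /K; have -> : m = (m.-1).+1 by lia.
  rewrite exprS; have : 1 <= 2 ^+ m.-1 :> R by apply: exprn_ege1; lra.
  move=> H; lra.
have Etri : forall b, (b < m)%N -> d (p m) (p b) <= delta p m + d (p j) (p b).
  by move=> b Hb; rewrite /delta -/j; exact: d_tri.
have Etri' : forall b, (b < m)%N -> d (p j) (p b) <= delta p m + d (p m) (p b).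
  by move=> b Hb; rewrite /delta -/j [d (p m) (p j)]d_sym; exact: d_tri.
have newlow : forall b, (b < m)%N -> 4 * K * d (p m) (p b) <= (2 * K - 2) * F b.
  move=> b Hb; have Hjm := Hj b Hb.
  apply: (arithA (Ktwo b Hb) (d_ge0 _ _) (Ige0 j b Hjm Hb) (d_ge0 _ _) (d_ge0 _ _)
     (Etri b Hb)).
  - by rewrite -EK1; apply: Ilow.
  - by rewrite -EK1; exact: Fgeh.
  - exact: FgeU.
have newup : forall b, (b < m)%N -> F b <= 2 * K * d (p m) (p b).
  move=> b Hb; have Hjm := Hj b Hb; rewrite ge_max; apply/andP; split.
  - rewrite /h EK1; apply: ler_wpM2l; first by apply: mulr_ge0 => //; lra.
    exact: nn_min.
  - apply: le_trans (Iup j b Hjm Hb) _.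
    have := Etri' b Hb; have := nn_min p Hb; have := d_ge0 (p m) (p b).
    set D := d (p m) (p b); set Dj := d (p j) (p b); set del := delta p m.
    move=> H1 H2 H3.
    have H4 : K * Dj <= K * (2 * D) by apply: ler_wpM2l => //; lra.
    apply: le_trans H4 _; rewrite mulrA (mulrC K 2); exact: lexx.
split; [|split; [|split; [|split; [|split]]]].
- move=> a b /lt_or_eq [Ha|->] /lt_or_eq [Hb|->].
  + by rewrite !Eo // Isym.
  + by rewrite EF // EF'.
  + by rewrite EF // EF'.
  + by [].
- by move=> a /lt_or_eq [Ha|->]; [rewrite Eo // Idiag | exact: Emm].
- move=> a b /lt_or_eq [Ha|->] /lt_or_eq [Hb|->].
  + by rewrite Eo // Ige0.
  + by rewrite EF'.
  + by rewrite EF.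
  + by rewrite Emm.
- move=> a b c /lt_or_eq [Ha|->] /lt_or_eq [Hb|->] /lt_or_eq [Hc|->].
  + by rewrite !Eo //; apply: Iult.
  + by rewrite (Eo a b) // (EF' a) // (EF' b) //; apply: Fb.
  + by rewrite (Eo a c) // (EF' a) // (EF c) //; apply: Fa.
  + by rewrite (EF' a) // Emm le_max lexx.
  + by rewrite (EF c) // (EF b) // (Eo b c) // maxC [Ualg p m b c]Isym //; apply: Fb.
  + by rewrite Emm (EF b) // (EF' b) // le_max Fge0.
  + by rewrite (EF c) // Emm le_max lexx orbT.
  + by rewrite Emm maxxx.
- move=> a b /lt_or_eq [Ha|->] /lt_or_eq [Hb|->].
  + rewrite Eo // EK1 EK2; apply: arithOld; [exact: Ige0 | by rewrite -EK1; apply: Ilow].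
  + by rewrite EF' // EK1 EK2 d_sym; apply: newlow.
  + by rewrite EF // EK1 EK2; apply: newlow.
  + by rewrite Emm d_xx !mulr0.
- move=> a b /lt_or_eq [Ha|->] /lt_or_eq [Hb|->].
  + rewrite Eo // EK1; apply: le_trans (Iup a b Ha Hb) _.
    have := d_ge0 (p a) (p b); set D := d _ _ => HD.
    rewrite -mulrA ler_peMl //; [exact: mulr_ge0 | lra].
  + by rewrite EF' // EK1 d_sym; apply: newup.
  + by rewrite EF // EK1; apply: newup.
  + by rewrite Emm d_xx !mulr0.
Qed.

End Alg.


Lemma Inv_all (R : realFieldType) (X : Type) (d : X -> X -> R) (dmet : is_metric d)
  (p : nat -> X) m : Inv d p m.
Proof. elim: m => [|m IH]; [exact: Inv0 | exact: Inv_step]. Qed.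

Lemma Ulow (R : realFieldType) (X : Type) (d : X -> X -> R) (dmet : is_metric d)
  (p : nat -> X) m a b : (a < m)%N -> (b < m)%N -> 2 * d (p a) (p b) <= Ualg d p m a b.
Proof.
move=> Ha Hb; have [_ [_ [Ige0 [_ [Ilow _]]]]] := Inv_all dmet p m.
have H1 := Ilow a b Ha Hb; have H2 := Ige0 a b Ha Hb.
have K0 : 0 < 2 ^+ m :> R by apply: exprn_gt0; lra.
rewrite -(ler_pM2l K0); apply: le_trans (_ : _ <= (2 ^+ m - 2) * Ualg d p m a b) _.
  by move: H1; rewrite exprS mulrA (mulrC 2).
rewrite ler_wpM2r //; lra.
Qed.

Definition Aalg (R : realFieldType) : forall X : Type, (X -> X -> R) -> seq X -> nat -> nat -> R :=
  fun X d s => match s with [::] => fun _ _ => 0 | a :: _ => Ualg d (fun k => nth a s k) (size s) end.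

Lemma A_mkseq (R : realFieldType) (X : Type) (d : X -> X -> R) (x : nat -> X) n :
  Aalg d (mkseq x n) =2 Ualg d x n.
Proof.
case: n => [//|n].
have Hs := size_mkseq x n.+1.
have Hn : forall k, (k < n.+1)%N -> forall a, nth a (mkseq x n.+1) k = x k.
  by move=> k Hk a; rewrite nth_mkseq.
rewrite /Aalg; case E: (mkseq x n.+1) Hs Hn => [//|a s'] Hs Hn.
rewrite -E size_mkseq; apply: Ualg_ext => k Hk /=; rewrite nth_mkseq //.
Qed.

Theorem mainTheorem15 (R : realType) :
  exists A : forall X : Type, (X -> X -> R) -> seq X -> nat -> nat -> R,
  forall (X : Type) (d : X -> X -> R), is_metric d ->
  forall x : nat -> X,
    (forall n, distinct_prefix x n -> HST_metric n (A X d (mkseq x n))) /\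
    (forall n, distinct_prefix x n.+1 -> forall i j, (i < n)%N -> (j < n)%N ->
        A X d (mkseq x n.+1) i j = A X d (mkseq x n) i j) /\
    (forall n, distinct_prefix x n -> forall i j, (i < n)%N -> (j < n)%N ->
        d (x i) (x j) <= A X d (mkseq x n) i j /\
        A X d (mkseq x n) i j <= 2 ^+ n * d (x i) (x j)).
Proof.
exists (@Aalg R) => X d dmet x; split; [|split].
- move=> n Hdist; exists 1; split => //.
  have [Isym [Idiag [Ige0 [Iult [Ilow Iup]]]]] := Inv_all dmet x n.
  apply: ultra_HST_gen.
  + by move=> a b Ha Hb; rewrite !A_mkseq Isym.
  + by move=> a Ha; rewrite A_mkseq Idiag.
  + move=> a b Ha Hb Hab; rewrite A_mkseq.
    apply: lt_le_trans (Ulow dmet x Ha Hb).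
    have : d (x a) (x b) != 0.
      apply/eqP; case: dmet => _ [Hd _] /Hd /(Hdist a b Ha Hb) E.
      by move: Hab; rewrite E eqxx.
    have := d_ge0 dmet (x a) (x b); move=> H0 H1.
    have : 0 < d (x a) (x b) by rewrite lt_neqAle eq_sym H1 H0.
    lra.
  + by move=> a b c Ha Hb Hc; rewrite !A_mkseq; apply: Iult.
- by move=> n _ i j Hi Hj; rewrite !A_mkseq Ualg_old.
- move=> n _ i j Hi Hj; rewrite A_mkseq; split.
  + have := Ulow dmet x Hi Hj; have := d_ge0 dmet (x i) (x j); lra.
  + by have [_ [_ [_ [_ [_ Iup]]]]] := Inv_all dmet x n; apply: Iup.
Qed.
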